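(* Let $(X_1,X_2,Y)$ be jointly distributed finite-valued random variables, and let $I_\cap,UI_1,UI_2,SI$ be nonnegative real numbers satisfying $I(X_1X_2;Y)=I_\cap+SI+UI_1+UI_2$, $I(X_1;Y)=I_\cap+UI_1$, $I(X_2;Y)=I_\cap+UI_2$. Then: (a) if $X_1-X_2-Y$, then $I_\cap=I(X_1;Y)$; (b) if $X_2-X_1-Y$, then $I_\cap=I(X_2;Y)$; (c) if both $X_1-X_2-Y$ and $X_2-X_1-Y$, then $I_\cap=I(X_1;Y)=I(X_2;Y)=I(X_1X_2;Y)$; (d) if $X_1-Y-X_2$, then $I_\cap\geq I(X_1;X_2)$.
   Context: For finite-valued random variables, $A-B-C$ means that $A$ and $C$ are conditionally independent given $B$. $X_1X_2$ denotes the joint variable $(X_1,X_2)$. The numbers $I_\cap$, $UI_1$, $UI_2$, $SI$ represent, respectively, the redundant, unique (of $X_1$), unique (of $X_2$) and synergistic information in a partial information decomposition of $I(X_1X_2;Y)$. *)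

(* Defs.v *)
From mathcomp Require Import all_boot all_order all_algebra.
From mathcomp Require Import reals exp.
Set Implicit Arguments. Unset Strict Implicit. Unset Printing Implicit Defensive.
Import Order.TTheory GRing.Theory Num.Theory.
Local Open Scope ring_scope.

Section FiniteProb.
Variable R : realType.
Variable Omega : finType.

Definition is_dist (P : Omega -> R) : Prop :=
  (forall w, 0 <= P w) /\ \sum_(w : Omega) P w = 1.

Definition pr (P : Omega -> R) (A : finType) (X : Omega -> A) (a : A) : R :=
  \sum_(w : Omega | X w == a) P w.

Definition pairRV (A B : finType) (X : Omega -> A) (Y : Omega -> B) :
  Omega -> A * B := fun w => (X w, Y w).

(* Mutual information I(X;Y) (natural log; convention 0 log 0 = 0). *)
Definition MI (P : Omega -> R) (A B : finType) (X : Omega -> A) (Y : Omega -> B) : R :=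
  \sum_(a : A) \sum_(b : B)
    let pab := pr P (pairRV X Y) (a, b) in
    if pab == 0 then 0 else pab * ln (pab / (pr P X a * pr P Y b)).

(* Markov chain A - B - C : A and C conditionally independent given B,
   i.e. p(a,b,c) p(b) = p(a,b) p(b,c) for all a b c. *)
Definition markov (P : Omega -> R) (A B C : finType)
  (X : Omega -> A) (Y : Omega -> B) (Z : Omega -> C) : Prop :=
  forall a b c,
    pr P (pairRV (pairRV X Y) Z) ((a, b), c) * pr P Y b =
    pr P (pairRV X Y) (a, b) * pr P (pairRV Y Z) (b, c).

End FiniteProb.

(* Main.v *)
Require Import Defs.
From mathcomp Require Import all_boot all_order all_algebra.
From mathcomp Require Import reals exp.
From mathcomp Require Import lra.
Import Order.TTheory GRing.Theory Num.Theory.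
Local Open Scope ring_scope.
Set Implicit Arguments. Unset Strict Implicit.

Section Aux.
Variable R : realType.
Variable Omega : finType.
Variable P : Omega -> R.
Hypothesis P0 : forall w, 0 <= P w.

Definition EE (f : Omega -> R) := \sum_(w : Omega) P w * f w.
Definition LL (C : finType) (Z : Omega -> C) (w : Omega) := ln (pr P Z (Z w)).

Lemma expE (C : finType) (Z : Omega -> C) (f : C -> R) :
  \sum_(c : C) pr P Z c * f c = EE (fun w => f (Z w)).
Proof.
rewrite /EE /pr.
under eq_bigr => c _ do rewrite big_distrl /= big_mkcond /=.
rewrite exchange_big /=; apply: eq_bigr => w _.
rewrite (bigD1 (Z w)) //= eqxx big1 ?addr0 // => c /negbTE.
by rewrite eq_sym => ->.
Qed.

Lemma pr_ge0 (C : finType) (Z : Omega -> C) c : 0 <= pr P Z c.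
Proof. by apply: sumr_ge0 => w _; apply: P0. Qed.

Lemma pr_le (C C' : finType) (Z : Omega -> C) (Z' : Omega -> C') c c' :
  (forall w, Z w == c -> Z' w == c') -> pr P Z c <= pr P Z' c'.
Proof.
move=> H; rewrite /pr (big_mkcond (fun w => Z w == c)) (big_mkcond (fun w => Z' w == c')).
apply: ler_sum => w _; case: ifP => h; first by rewrite (H _ h).
by case: ifP => _ //; apply: P0.
Qed.

Lemma pr_geP (C : finType) (Z : Omega -> C) w : P w <= pr P Z (Z w).
Proof.
rewrite /pr (bigD1 w) //= lerDl; apply: sumr_ge0 => ? _; apply: P0.
Qed.

Lemma MIE (A B : finType) (X : Omega -> A) (Y : Omega -> B) :
  MI P X Y = EE (fun w => LL (pairRV X Y) w - LL X w - LL Y w).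
Proof.
rewrite /MI.
have -> : \sum_(a : A) \sum_(b : B)
    (let pab := pr P (pairRV X Y) (a, b) in
     if pab == 0 then 0 else pab * ln (pab / (pr P X a * pr P Y b))) =
  \sum_(a : A) \sum_(b : B) pr P (pairRV X Y) (a, b) *
     (ln (pr P (pairRV X Y) (a, b)) - ln (pr P X a) - ln (pr P Y b)).
  apply: eq_bigr => a _; apply: eq_bigr => b _ /=.
  case: eqP => [->|/eqP h]; first by rewrite mul0r.
  have hp : 0 < pr P (pairRV X Y) (a, b) by rewrite lt_def h pr_ge0.
  have ha : 0 < pr P X a.
    apply: (lt_le_trans hp); apply: pr_le => w; rewrite /pairRV xpair_eqE.
    by case/andP.
  have hb : 0 < pr P Y b.
    apply: (lt_le_trans hp); apply: pr_le => w; rewrite /pairRV xpair_eqE.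
    by case/andP.
  rewrite ln_div ?posrE ?mulr_gt0 // lnM ?posrE //.
  congr (_ * _); lra.
rewrite pair_bigA /=.
rewrite (eq_bigr (fun p : A * B => pr P (pairRV X Y) p *
   (ln (pr P (pairRV X Y) p) - ln (pr P X p.1) - ln (pr P Y p.2)))); last by case.
by rewrite expE.
Qed.

Lemma EE_ext f g : (forall w, 0 < P w -> f w = g w) -> EE f = EE g.
Proof.
move=> H; apply: eq_bigr => w _.
have := P0 w; rewrite le_eqVlt => /orP [/eqP <-|h]; first by rewrite !mul0r.
by rewrite H.
Qed.

Lemma EE_add f g : EE f + EE g = EE (fun w => f w + g w).
Proof. by rewrite /EE -big_split; apply: eq_bigr => w _; rewrite mulrDr. Qed.

Lemma EE_sub f g : EE f - EE g = EE (fun w => f w - g w).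
Proof.
by rewrite /EE -sumrN -big_split; apply: eq_bigr => w _; rewrite mulrBr.
Qed.

Lemma LL_eq (C C' : finType) (Z : Omega -> C) (Z' : Omega -> C') w :
  (forall w', (Z w' == Z w) = (Z' w' == Z' w)) -> LL Z w = LL Z' w.
Proof. by move=> H; rewrite /LL /pr; congr ln; apply: eq_bigl => w'; rewrite H. Qed.

Lemma CI (A B C : finType) (X : Omega -> A) (Y : Omega -> B) (Z : Omega -> C) w :
  markov P X Y Z -> 0 < P w ->
  LL (pairRV (pairRV X Y) Z) w + LL Y w = LL (pairRV X Y) w + LL (pairRV Y Z) w.
Proof.
move=> M Pw; rewrite /LL.
have p1 := lt_le_trans Pw (pr_geP (pairRV (pairRV X Y) Z) w).
have p2 := lt_le_trans Pw (pr_geP Y w).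
have p3 := lt_le_trans Pw (pr_geP (pairRV X Y) w).
have p4 := lt_le_trans Pw (pr_geP (pairRV Y Z) w).
rewrite -!lnM ?posrE //.
by congr ln; exact: M.
Qed.

Lemma markov_MI (A B C : finType) (X : Omega -> A) (Y : Omega -> B) (Z : Omega -> C) :
  markov P X Y Z -> MI P (pairRV X Y) Z = MI P Y Z.
Proof.
move=> M; rewrite !MIE; apply: EE_ext => w Pw.
have := CI M Pw; lra.
Qed.

Lemma markov_MI_swap (A B C : finType) (X : Omega -> A) (Y : Omega -> B) (Z : Omega -> C) :
  markov P X Y Z -> MI P (pairRV Y X) Z = MI P Y Z.
Proof.
move=> M; rewrite !MIE; apply: EE_ext => w Pw.
have := CI M Pw.
rewrite (LL_eq (Z := pairRV (pairRV X Y) Z) (Z' := pairRV (pairRV Y X) Z)); last first.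
  by move=> w'; rewrite /pairRV !xpair_eqE; case: (X w' == _); case: (Y w' == _); case: (Z w' == _).
rewrite (LL_eq (Z := pairRV X Y) (Z' := pairRV Y X)); last first.
  by move=> w'; rewrite /pairRV !xpair_eqE andbC.
lra.
Qed.

Lemma markov_co (A B C : finType) (X : Omega -> A) (Y : Omega -> B) (Z : Omega -> C) :
  markov P X Y Z -> MI P X Z = MI P X Y + MI P Z Y - MI P (pairRV X Z) Y.
Proof.
move=> M; rewrite !MIE EE_add EE_sub; apply: EE_ext => w Pw.
have := CI M Pw.
rewrite (LL_eq (Z := pairRV (pairRV X Y) Z) (Z' := pairRV (pairRV X Z) Y)); last first.
  by move=> w'; rewrite /pairRV !xpair_eqE; case: (X w' == _); case: (Y w' == _); case: (Z w' == _).
rewrite (LL_eq (Z := pairRV Y Z) (Z' := pairRV Z Y)); last first.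
  by move=> w'; rewrite /pairRV !xpair_eqE andbC.
lra.
Qed.

End Aux.

Theorem lemma4 (R : realType) (Omega : finType) (P : Omega -> R)
  (A1 A2 B : finType) (X1 : Omega -> A1) (X2 : Omega -> A2) (Y : Omega -> B)
  (Icap UI1 UI2 SI : R) :
  is_dist P ->
  0 <= Icap -> 0 <= UI1 -> 0 <= UI2 -> 0 <= SI ->
  MI P (pairRV X1 X2) Y = Icap + SI + UI1 + UI2 ->
  MI P X1 Y = Icap + UI1 ->
  MI P X2 Y = Icap + UI2 ->
  [/\ (markov P X1 X2 Y -> Icap = MI P X1 Y),
      (markov P X2 X1 Y -> Icap = MI P X2 Y),
      (markov P X1 X2 Y -> markov P X2 X1 Y ->
         Icap = MI P X1 Y /\ MI P X1 Y = MI P X2 Y /\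
         MI P X2 Y = MI P (pairRV X1 X2) Y)
    & (markov P X1 Y X2 -> MI P X1 X2 <= Icap)].
Proof.
move=> [P0 _] hI h1 h2 hS e12 e1 e2; split.
- by move=> M; have := markov_MI P0 M; lra.
- by move=> M; have := markov_MI_swap P0 M; lra.
- move=> M1 M2; have := markov_MI P0 M1; have := markov_MI_swap P0 M2; lra.
- by move=> M; have := markov_co P0 M; lra.
Qed.
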